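(* Let $\mathbf{A}\in\mathbb{R}^{n\times d}$, $\mathbf{B}\in\mathbb{R}^{n\times d_B}$, $\mathbf{C}\in\mathbb{R}^{n_C\times d}$, let $\mathbf{Y}=\mathrm{diag}(y_1,\dots,y_{d_B})$, $\mathbf{Z}=\mathrm{diag}(z_1,\dots,z_{n_C})$ with variables $y_i,z_j$, and let $k,r$ be integers with $0\le k\le\mathrm{rank}(\mathbf{B})$, $0\le r\le\mathrm{rank}(\mathbf{C})$. For any $S\subset[d_B]$ of size $k$ and $R\subset[n_C]$ of size $r$, $$\det[\mathbf{C}_{R,:}(\mathbf{C}_{R,:})^{\rm T}]\det[(\mathbf{B}_{:,S})^{\rm T}\mathbf{B}_{:,S}]\,p_{S,R}(xw;\mathbf{A},\mathbf{B},\mathbf{C})=(-1)^{k+r}x^r w^{d+k-n}\,\partial_{\mathbf{Y}^{S^C}}\partial_{\mathbf{Z}^{R^C}}H(x,w,\mathbf{Y},\mathbf{Z};\mathbf{A},\mathbf{B},\mathbf{C})\Big|_{y_i=0\,\forall i,\ z_j=0\,\forall j},$$ where $\partial_{\mathbf{Y}^{S^C}}=\prod_{i\in[d_B]\setminus S}\partial_{y_i}$ and $\partial_{\mathbf{Z}^{R^C}}=\prod_{j\in[n_C]\setminus R}\partial_{z_j}$.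
   Context: Notation: $\mathbf{M}_{R,S}$, $\mathbf{M}_{:,S}$, $\mathbf{M}_{R,:}$ are submatrices; $\mathbf{M}^\dagger$ Moore–Penrose pseudoinverse with $\mathbf{M}_{R,S}^\dagger:=(\mathbf{M}_{R,S})^\dagger$; empty determinants are $1$ and $\mathbf{M}_{:,\emptyset}\mathbf{M}_{:,\emptyset}^\dagger$, $\mathbf{M}_{\emptyset,:}^\dagger\mathbf{M}_{\emptyset,:}$ are zero. $\mathbf{Q}_S=\mathbf{I}_n-\mathbf{B}_{:,S}\mathbf{B}_{:,S}^\dagger$, $\mathbf{P}_R=\mathbf{I}_d-\mathbf{C}_{R,:}^\dagger\mathbf{C}_{R,:}$, $p_{S,R}(x;\mathbf{A},\mathbf{B},\mathbf{C})=\det[x\mathbf{I}_d-(\mathbf{Q}_S\mathbf{A}\mathbf{P}_R)^{\rm T}(\mathbf{Q}_S\mathbf{A}\mathbf{P}_R)]$. Define $$H(x,w,\mathbf{Y},\mathbf{Z};\mathbf{A},\mathbf{B},\mathbf{C})=\det\begin{pmatrix} w\mathbf{I}_n&\mathbf{0}&\mathbf{B}&\mathbf{A}\\ \mathbf{0}&\mathbf{Z}&\mathbf{0}&\mathbf{C}\\ \mathbf{B}^{\rm T}&\mathbf{0}&\mathbf{Y}&\mathbf{0}\\ \mathbf{A}^{\rm T}&\mathbf{C}^{\rm T}&\mathbf{0}&x\mathbf{I}_d\end{pmatrix}.$$ *)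

(* Defs.v *)
From Stdlib Require Import ClassicalEpsilon.
From mathcomp Require Import all_boot all_order all_algebra.
From mathcomp Require Import mpoly.
Set Implicit Arguments. Unset Strict Implicit. Unset Printing Implicit Defensive.
Import Order.TTheory GRing.Theory Num.Theory.
Local Open Scope ring_scope.

Section Defs.
Variable R : realFieldType.

Definition is_MP_pinv (m n : nat) (M : 'M[R]_(m, n)) (X : 'M[R]_(n, m)) : Prop :=
  [/\ M *m X *m M = M, X *m M *m X = X,
      (M *m X)^T = M *m X & (X *m M)^T = X *m M].

Definition mp_pinv (m n : nat) (M : 'M[R]_(m, n)) : 'M[R]_(n, m) :=
  epsilon (inhabits 0) (is_MP_pinv M).

(* Column submatrix M_{:,S}: columns of M indexed by S, in increasing order. *)
Definition colS (m n : nat) (M : 'M[R]_(m, n)) (S : {set 'I_n}) : 'M[R]_(m, #|S|) :=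
  colsub (fun i : 'I_#|S| => enum_val i) M.

(* Row submatrix M_{R,:}: rows of M indexed by T, in increasing order. *)
Definition rowS (m n : nat) (M : 'M[R]_(m, n)) (T : {set 'I_m}) : 'M[R]_(#|T|, n) :=
  rowsub (fun i : 'I_#|T| => enum_val i) M.

Definition Qmx (n dB : nat) (B : 'M[R]_(n, dB)) (S : {set 'I_dB}) : 'M[R]_n :=
  1%:M - colS B S *m mp_pinv (colS B S).

Definition Pmx (nC d : nat) (C : 'M[R]_(nC, d)) (T : {set 'I_nC}) : 'M[R]_d :=
  1%:M - mp_pinv (rowS C T) *m rowS C T.

Definition pSR (n d dB nC : nat) (A : 'M[R]_(n, d)) (B : 'M[R]_(n, dB))
    (C : 'M[R]_(nC, d)) (S : {set 'I_dB}) (T : {set 'I_nC}) (x : R) : R :=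
  let M := Qmx B S *m A *m Pmx C T in
  \det (x%:M - M^T *m M).

(* Polynomial ring in the variables y_1..y_dB, z_1..z_nC (indices dB + nC). *)
Definition yvar (dB nC : nat) (i : 'I_dB) : {mpoly R[dB + nC]} := 'X_(lshift nC i).
Definition zvar (dB nC : nat) (j : 'I_nC) : {mpoly R[dB + nC]} := 'X_(rshift dB j).

(* The block matrix whose determinant is H(x, w, Y, Z; A, B, C), with
   Y = diag(y_i), Z = diag(z_j), x and w real numbers. Block sizes are
   n, nC, dB, d (rows and columns). *)
Definition Hmx (n d dB nC : nat) (A : 'M[R]_(n, d)) (B : 'M[R]_(n, dB))
    (C : 'M[R]_(nC, d)) (x w : R) : 'M[{mpoly R[dB + nC]}]_(n + (nC + (dB + d))) :=
  let c := fun a : R => a%:MP_[dB + nC] in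
  let A' := map_mx c A in
  let B' := map_mx c B in
  let C' := map_mx c C in
  let Y := diag_mx (\row_i yvar nC i) in
  let Z := diag_mx (\row_j zvar dB j) in
  col_mx (row_mx (c w)%:M (row_mx 0 (row_mx B' A')))
 (col_mx (row_mx 0 (row_mx Z (row_mx 0 C')))
 (col_mx (row_mx B'^T (row_mx 0 (row_mx Y 0)))
         (row_mx A'^T (row_mx C'^T (row_mx 0 (c x)%:M))))).

Definition Hpoly (n d dB nC : nat) (A : 'M[R]_(n, d)) (B : 'M[R]_(n, dB))
    (C : 'M[R]_(nC, d)) (x w : R) : {mpoly R[dB + nC]} :=
  \det (Hmx A B C x w).

Definition mderivs (N : nat) (s : seq 'I_N) (p : {mpoly R[N]}) : {mpoly R[N]} :=
  foldr (fun i q => q^`M(i)) p s.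

End Defs.

(* Main.v *)
Require Import Defs.
From Stdlib Require Import ClassicalEpsilon.
From mathcomp Require Import all_boot all_order all_algebra.
From mathcomp Require Import mpoly.
From mathcomp Require Import ring.
Set Implicit Arguments. Unset Strict Implicit. Unset Printing Implicit Defensive.
Import Order.TTheory GRing.Theory Num.Theory.
Local Open Scope ring_scope.
Section LA.
Variable R : comNzRingType.

Lemma sylvester p q (U : 'M[R]_(p, q)) (V : 'M[R]_(q, p)) :
  \det (1%:M + U *m V) = \det (1%:M + V *m U).
Proof.
have e1 : block_mx 1%:M (- U) V 1%:M
   = block_mx 1%:M 0 V 1%:M *m block_mx 1%:M (- U) 0 (1%:M + V *m U).
  rewrite mulmx_block !mul1mx ?mul0mx ?mulmx0 ?mulmx1 ?addr0 ?add0r.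
  by rewrite mulmxN addrCA addNr addr0.
have e2 : block_mx 1%:M (- U) V 1%:M
   = block_mx (1%:M + U *m V) (- U) 0 1%:M *m block_mx 1%:M 0 V 1%:M.
  rewrite mulmx_block !mul1mx ?mul0mx ?mulmx0 ?mulmx1 ?addr0 ?add0r.
  by rewrite mulNmx addrK.
have h1 := congr1 determinant e1; have h2 := congr1 determinant e2.
rewrite det_mulmx det_lblock det_ublock !det1 !mul1r in h1.
rewrite det_mulmx det_lblock det_ublock !det1 !mulr1 in h2.
by rewrite -h1 -h2.
Qed.

End LA.
Section LAF.
Variable F : fieldType.

Lemma inv_eq n (A B : 'M[F]_n) : A *m B = 1%:M -> invmx A = B.
Proof.
move=> AB; have [uA _] := mulmx1_unit AB.
by rewrite -[RHS](mulKmx uA) AB mulmx1.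
Qed.

Lemma schur m1 m2 (a : 'M[F]_m1) b c (d : 'M[F]_m2) : a \in unitmx ->
  \det (block_mx a b c d) = \det a * \det (d - c *m invmx a *m b).
Proof.
move=> ua.
have -> : block_mx a b c d = block_mx 1%:M 0 (c *m invmx a) 1%:M
   *m block_mx a b 0 (d - c *m invmx a *m b).
  rewrite mulmx_block !mul1mx ?mul0mx ?mulmx0 ?mulmx1 ?addr0 ?add0r.
  by rewrite -mulmxA mulVmx // mulmx1 addrCA addrN addr0.
by rewrite det_mulmx det_lblock det_ublock !det1 !mul1r.
Qed.

Lemma detN n (A : 'M[F]_n) : \det (- A) = (-1) ^+ n * \det A.
Proof. by rewrite -scaleN1r detZ. Qed.

Lemma scal_sub t n (A : 'M[F]_n) : t != 0 ->
  t%:M - A = t *: (1%:M + (- t^-1) *: A).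
Proof.
move=> t0; rewrite scalerDr scalemx1 scalerA mulrN divff // scaleN1r.
by [].
Qed.

Lemma det_swap t n (U V : 'M[F]_n) :
  \det (t%:M - U *m V) = \det (t%:M - V *m U).
Proof.
have [->|t0] := eqVneq t 0.
  by rewrite raddf0 !sub0r !detN !det_mulmx [\det U * _]mulrC.
rewrite !scal_sub // !detZ; congr (_ * _).
by rewrite scalemxAl sylvester -scalemxAr.
Qed.

Lemma block_ident p m (X : 'M[F]_p) (V : 'M[F]_(p, m)) :
  V^T *m V \in unitmx ->
  \det (block_mx X V V^T 0) = (-1) ^+ m * \det (V^T *m V)
     * \det (X + V *m (invmx (V^T *m V) *m V^T *m (1%:M - X))).
Proof.
move=> uG; set G := V^T *m V; set Y := invmx G *m V^T *m (1%:M - X).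
have e1 : block_mx X V V^T 0 *m block_mx 1%:M 0 Y 1%:M
   = block_mx (X + V *m Y) V V^T 0.
  by rewrite mulmx_block ?mulmx1 ?mulmx0 ?mul0mx ?addr0 ?add0r.
have VZ : V^T *m (X + V *m Y) = V^T.
  rewrite mulmxDr /Y !mulmxA -/G mulmxV // mul1mx mulmxBr mulmx1.
  by rewrite addrCA addrN addr0.
have e2 : block_mx 1%:M 0 (- V^T) 1%:M *m block_mx (X + V *m Y) V V^T 0
   = block_mx (X + V *m Y) V 0 (- G).
  rewrite mulmx_block ?mul1mx ?mul0mx ?mulmx0 ?addr0 ?add0r mulNmx VZ.
  by rewrite addNr mulNmx.
have := congr1 determinant e2; rewrite det_mulmx det_lblock !det1 !mul1r.
rewrite det_ublock detN -e1 det_mulmx det_lblock !det1 !mulr1 => ->.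
by rewrite mulrC.
Qed.

End LAF.
Section Pinv.
Variable R : realFieldType.

Lemma pinv_col m k (M : 'M[R]_(m, k)) : M^T *m M \in unitmx ->
  mp_pinv M = invmx (M^T *m M) *m M^T.
Proof.
move=> uG; set G := M^T *m M.
have GT : G^T = G by rewrite /G trmx_mul trmxK.
have ex : is_MP_pinv M (invmx G *m M^T).
  split.
  - by rewrite -!mulmxA -/G mulVmx // mulmx1.
  - by rewrite !mulmxA -(mulmxA (invmx G)) -/G mulVmx // mul1mx.
  - by rewrite !trmx_mul trmxK trmx_inv GT mulmxA.
  - by rewrite -mulmxA -/G mulVmx // trmx1.
have := epsilon_spec (inhabits 0) (is_MP_pinv M) (ex_intro _ _ ex).
rewrite -/(mp_pinv M); set X := mp_pinv M; case=> e1 _ e3 _.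
have MT : M^T = G *m X.
  by rewrite -{1}e1 trmx_mul e3 mulmxA.
by rewrite MT mulmxA mulVmx // mul1mx.
Qed.

Lemma pinv_row m k (M : 'M[R]_(k, m)) : M *m M^T \in unitmx ->
  mp_pinv M = M^T *m invmx (M *m M^T).
Proof.
move=> uK; set K := M *m M^T.
have KT : K^T = K by rewrite /K trmx_mul trmxK.
have ex : is_MP_pinv M (M^T *m invmx K).
  split.
  - by rewrite mulmxA -/K mulmxV // mul1mx.
  - by rewrite !mulmxA -(mulmxA _ M M^T) -/K mulmxK.
  - by rewrite mulmxA -/K mulmxV // trmx1.
  - by rewrite !trmx_mul trmxK trmx_inv KT mulmxA.
have := epsilon_spec (inhabits 0) (is_MP_pinv M) (ex_intro _ _ ex).
rewrite -/(mp_pinv M); set X := mp_pinv M; case=> e1 _ _ e4.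
have MT : M = K *m X^T.
  by rewrite -{1}e1 -mulmxA -e4 trmx_mul mulmxA.
have -> : X = (X^T)^T by rewrite trmxK.
by rewrite -[X^T](mulKmx uK) -MT trmx_mul trmx_inv KT.
Qed.

End Pinv.
Section Core.
Variable R : realFieldType.

Lemma det_proj n k (U : 'M[R]_(n, k)) (W : 'M[R]_(k, n)) t :
  W *m U = 1%:M -> \det (1%:M + t *: (U *m W)) = (1 + t) ^+ k.
Proof.
move=> WU; rewrite scalemxAl sylvester -scalemxAr WU scalemx1.
by rewrite -raddfD det_scalar.
Qed.

Lemma proj_facts n (Pi : 'M[R]_n) : Pi *m Pi = Pi ->
  [/\ (1%:M - Pi) *m (1%:M - Pi) = 1%:M - Pi, (1%:M - Pi) *m Pi = 0
    & Pi *m (1%:M - Pi) = 0].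
Proof.
move=> PP; have h1 : (1%:M - Pi) *m Pi = 0 by rewrite mulmxBl mul1mx PP subrr.
have h2 : Pi *m (1%:M - Pi) = 0 by rewrite mulmxBr mulmx1 PP subrr.
by split=> //; rewrite mulmxBl h2 mul1mx subr0.
Qed.

End Core.
Section Core2.
Variable R : realFieldType.

Lemma core n d k r (A : 'M[R]_(n, d)) (b : 'M[R]_(n, k)) (c : 'M[R]_(r, d))
    (x w : R) :
  w != 0 -> b^T *m b \in unitmx -> c *m c^T \in unitmx ->
  let V := block_mx b 0 0 c^T in
  let Q := 1%:M - b *m mp_pinv b in let P := 1%:M - mp_pinv c *m c in
  let M := Q *m A *m P in
  x ^+ r * \det (block_mx (block_mx w%:M A A^T x%:M) V V^T 0)
  = (-1) ^+ (k + r) * (\det (b^T *m b) * \det (c *m c^T))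
    * (w ^+ n * w^-1 ^+ k * w^-1 ^+ d) * \det ((x * w)%:M - M^T *m M).
Proof.
move=> w0 uG uK V Q P M.
set G := b^T *m b; set K := c *m c^T.
have VtV : V^T *m V = block_mx G 0 0 K.
  rewrite /V tr_block_mx !trmx0 trmxK mulmx_block.
  by rewrite !mulmx0 !mul0mx !addr0 !add0r.
have uV : V^T *m V \in unitmx.
  by rewrite VtV unitmxE det_ublock unitrM -!unitmxE uG uK.
have iV : invmx (V^T *m V) = block_mx (invmx G) 0 0 (invmx K).
  apply: inv_eq; rewrite VtV mulmx_block !mulmx0 !mul0mx !addr0 !add0r.
  by rewrite !mulmxV // -scalar_mx_block.
rewrite block_ident // iV VtV det_ublock.
rewrite /V tr_block_mx !trmx0 trmxK.
rewrite [1%:M](scalar_mx_block n d) opp_block_mx add_block_mx.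
rewrite !mulmx_block !(mulmx0, mul0mx, addr0, add0r).
rewrite /M /Q /P pinv_col // pinv_row // -/G -/K.
set Pi1 := b *m (invmx G *m b^T); set Pi2 := c^T *m invmx K *m c.
have -> : forall z11 z12 z21 z22,
    block_mx w%:M A A^T x%:M + block_mx z11 z12 z21 z22
    = block_mx (w%:M + z11) (A + z12) (A^T + z21) (x%:M + z22).
  by move=> *; rewrite add_block_mx.
have e11 : w%:M + b *m (invmx G *m b^T *m (1%:M - w%:M))
    = w *: (1%:M - Pi1) + Pi1.
  rewrite !mulmxA -[b *m _ *m _]mulmxA -/Pi1 mulmxBr mulmx1 mul_mx_scalar.
  by rewrite scalerBr scalemx1 addrCA addrC.
have e12 : A + b *m (invmx G *m b^T *m - A) = (1%:M - Pi1) *m A.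
  by rewrite !mulmxA -[b *m _ *m _]mulmxA -/Pi1 mulmxBl mul1mx mulmxN.
have e21 : A^T + c^T *m (invmx K *m c *m - A^T) = (1%:M - Pi2) *m A^T.
  by rewrite !mulmxA -/Pi2 mulmxBl mul1mx mulmxN.
have e22 : x%:M + c^T *m (invmx K *m c *m (1%:M - x%:M))
    = x *: (1%:M - Pi2) + Pi2.
  rewrite !mulmxA -/Pi2 mulmxBr mulmx1 mul_mx_scalar.
  by rewrite scalerBr scalemx1 addrCA addrC.
rewrite e11 e12 e21 e22.
have GT : G^T = G by rewrite /G trmx_mul trmxK.
have KT : K^T = K by rewrite /K trmx_mul trmxK.
have PP1 : Pi1 *m Pi1 = Pi1.
  by rewrite /Pi1 !mulmxA -(mulmxA (b *m invmx G) b^T b) -/G mulmxKV.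
have PP2 : Pi2 *m Pi2 = Pi2.
  by rewrite /Pi2 !mulmxA -(mulmxA (c^T *m invmx K) c c^T) -/K mulmxKV.
have PT1 : Pi1^T = Pi1.
  by rewrite /Pi1 !trmx_mul trmxK trmx_inv GT mulmxA.
have PT2 : Pi2^T = Pi2.
  by rewrite /Pi2 !trmx_mul trmxK trmx_inv KT mulmxA.
have [QQ QP PQ] := proj_facts PP1.
have [RR RP PR] := proj_facts PP2.
set Q1 := 1%:M - Pi1 in QQ QP PQ *; set P1 := 1%:M - Pi2 in RR RP PR *.
have Q1T : Q1^T = Q1 by rewrite /Q1 linearB /= trmx1 PT1.
have P1T : P1^T = P1 by rewrite /P1 linearB /= trmx1 PT2.
have pZ : (w *: Q1 + Pi1) *m (w^-1 *: Q1 + Pi1) = 1%:M.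
  rewrite mulmxDl !mulmxDr -!scalemxAl -!scalemxAr.
  rewrite QQ QP PQ PP1 !scaler0 !addr0 add0r scalerA divff // scale1r.
  by rewrite /Q1 subrK.
have iZ := inv_eq pZ; have [uZ _] := mulmx1_unit pZ.
have dZ : \det (w *: Q1 + Pi1) = w ^+ n * w^-1 ^+ k.
  have -> : w *: Q1 + Pi1 = w *: (1%:M + (w^-1 - 1) *: Pi1).
    rewrite /Q1 !scalerBr !scalerDr scalerA mulrBr divff // mulr1.
    by rewrite scalerBl scale1r scalemx1 addrA addrAC.
  rewrite detZ det_proj; first by rewrite addrC subrK.
  by rewrite -mulmxA mulVmx.
rewrite schur // dZ iZ.
have eP1 : P1 = 1%:M - Pi2 by [].
clearbody Q1 P1.
set Jm := P1 *m A^T *m Q1 *m A.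
have eS : P1 *m A^T *m (w^-1 *: Q1 + Pi1) *m (Q1 *m A) = w^-1 *: Jm.
  rewrite -mulmxA (mulmxA (w^-1 *: Q1 + Pi1)) (mulmxDl (w^-1 *: Q1)) -scalemxAl QQ PQ addr0.
  by rewrite -scalemxAl -scalemxAr /Jm !mulmxA.
rewrite eS.
have RJ : P1 *m Jm = Jm by rewrite /Jm !mulmxA RR.
have PJ : Pi2 *m Jm = 0 by rewrite /Jm !mulmxA PR !mul0mx.
have hL : (P1 + x *: Pi2) *m (x *: P1 + Pi2 - w^-1 *: Jm) = x%:M - w^-1 *: Jm.
  rewrite mulmxBr !mulmxDl !mulmxDr -!scalemxAl -!scalemxAr.
  rewrite RR RP PR PP2 RJ PJ !scaler0 !addr0 !add0r.
  by rewrite -scalerDr eP1 subrK scalemx1.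
have dL : \det (P1 + x *: Pi2) = x ^+ r.
  have -> : P1 + x *: Pi2 = 1%:M + (x - 1) *: Pi2.
    by rewrite eP1 scalerBl scale1r addrAC -addrA.
  rewrite /Pi2 -mulmxA det_proj; first by rewrite addrC subrK.
  by rewrite -mulmxA mulVmx.
have hX : x ^+ r * \det (x *: P1 + Pi2 - w^-1 *: Jm) = \det (x%:M - w^-1 *: Jm).
  by rewrite -dL -det_mulmx hL.
have dW : \det ((x * w)%:M - Jm) = w ^+ d * \det (x%:M - w^-1 *: Jm).
  rewrite -detZ scalerBr scale_scalar_mx scalerA divff // scale1r.
  by rewrite mulrC.
have MtM : (Q1 *m A *m P1)^T *m (Q1 *m A *m P1) = Jm *m P1.
  rewrite !trmx_mul Q1T P1T !mulmxA -(mulmxA _ Q1 Q1) QQ.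
  by rewrite /Jm.
rewrite MtM det_swap RJ dW.
move: hX; set S := \det (x *: P1 + Pi2 - w^-1 *: Jm).
set D := \det (x%:M - w^-1 *: Jm) => hX.
rewrite -hX.
have e : w^-1 ^+ d * w ^+ d = 1 by rewrite -exprMn mulVf // expr1n.
have -> : forall (s0 D0 a v u X : R), s0 * D0 * (a * v) * (u * X)
   = s0 * D0 * a * (v * u) * X by move=> *; ring.
rewrite e mulr1; ring.
Qed.

End Core2.
Section Degen.
Variable R : realFieldType.

Lemma rv_sq0 m (u : 'rV[R]_m) : u *m u^T = 0 -> u = 0.
Proof.
move=> h; have h0 := congr1 (fun M : 'M_1 => M 0 0) h; move: h0 => /=.
rewrite !mxE => hs; apply/rowP => i; rewrite mxE.
have hnn : forall j, predT j -> 0 <= u 0 j * u^T j 0.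
  by move=> j _; rewrite mxE -expr2 sqr_ge0.
have := @psumr_eq0P _ _ predT (fun j => u 0 j * u^T j 0) hnn hs i isT.
by rewrite mxE -expr2 => /eqP; rewrite sqrf_eq0 => /eqP.
Qed.

Lemma ker_vec m k (v : 'rV[R]_k) (b : 'M[R]_(m, k)) :
  v *m (b^T *m b) = 0 -> v *m b^T = 0.
Proof.
move=> h; apply: rv_sq0.
by rewrite trmx_mul trmxK mulmxA -(mulmxA v) h mul0mx.
Qed.

Lemma degen n d k r (A : 'M[R]_(n, d)) (b : 'M[R]_(n, k)) (c : 'M[R]_(r, d))
    (x w : R) :
  ~~ (b^T *m b \in unitmx) || ~~ (c *m c^T \in unitmx) ->
  let V := block_mx b 0 0 c^T in
  \det (block_mx (block_mx w%:M A A^T x%:M) V V^T 0) = 0.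
Proof.
move=> h V; apply/eqP/det0P.
have VT : V^T = block_mx b^T 0 0 c by rewrite /V tr_block_mx !trmx0 trmxK.
case/orP: h; rewrite unitmxE unitfE negbK => /det0P [v v0 hv].
  exists (row_mx 0 (row_mx v 0)).
    by rewrite !row_mx_eq0 (negbTE v0) ?andbF ?andFb ?eqxx ?orbT.
  rewrite mul_row_block VT mul_row_block (ker_vec hv).
  by rewrite !(mul0mx, mulmx0, add0r, addr0) !row_mx0.
exists (row_mx 0 (row_mx 0 v)).
  by rewrite !row_mx_eq0 (negbTE v0) ?andbF ?andFb ?eqxx ?orbT.
have hv' : v *m c = 0.
  by have := ker_vec (b := c^T); rewrite trmxK => ->.
rewrite mul_row_block VT mul_row_block hv'.
by rewrite !(mul0mx, mulmx0, add0r, addr0) !row_mx0.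
Qed.

End Degen.
Section MP.
Variable R : realFieldType.
Variable K : nat.
Local Notation P := {mpoly R[K]}.

Lemma mderivXU (i j : 'I_K) : ('X_j : P)^`M(i) = (j == i)%:R.
Proof.
rewrite mderivX mnm1E; case: eqP => [->|_]; last by rewrite scale0r.
have -> : (U_(i) - U_(i))%MM = 0%MM.
  by apply/mnmP => l; rewrite mnmBE subnn mnm0E.
by rewrite mpolyX0 scale1r.
Qed.

Lemma mderiv_nat v (m : nat) : ((m%:R : P))^`M(v) = 0.
Proof. by rewrite -mpolyC_nat mderivC. Qed.

Lemma mderiv_sign v (m : nat) : (((-1) ^+ m : P))^`M(v) = 0.
Proof.
have -> : ((-1) ^+ m : P) = ((-1) ^+ m)%:MP by rewrite rmorphXn rmorphN1.
exact: mderivC.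
Qed.

Lemma det_kerd m (M : 'M[P]_m) v :
  (forall i j, (M i j)^`M(v) = 0) -> (\det M)^`M(v) = 0.
Proof.
move=> h; rewrite /determinant.
apply: (big_ind (fun p : P => p^`M(v) = 0)) => [|p q hp hq|s _].
- exact: mderiv0.
- by rewrite mderivD hp hq addr0.
rewrite mderivM mderiv_sign mul0r add0r.
rewrite [X in _ * X](_ : _ = 0) ?mulr0 //.
apply: (big_ind (fun p : P => p^`M(v) = 0)) => [|p q hp hq|i _].
- by rewrite -mpolyC1 mderivC.
- by rewrite mderivM hp hq mul0r mulr0 addr0.
exact: h.
Qed.

Definition rr m (p : 'I_m) (M : 'M[P]_m) : 'M[P]_m :=
  \matrix_(i, j) if i == p then (i == j)%:R else M i j.

Lemma deriv_det_rr m (M : 'M[P]_m) p v :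
  (forall i j, i != p -> (M i j)^`M(v) = 0) ->
  (forall j, (M p j)^`M(v) = (j == p)%:R) ->
  (\det M)^`M(v) = \det (rr p M).
Proof.
move=> h1 h2; rewrite (expand_det_row M p) (expand_det_row (rr p M) p).
rewrite raddf_sum /=; apply: eq_bigr => j _.
have ec : cofactor (rr p M) p j = cofactor M p j.
  rewrite /cofactor; congr (_ * \det _); apply/matrixP => a b.
  by rewrite !mxE eq_sym (negbTE (neq_lift _ _)).
rewrite ec mderivM h2 mxE eqxx eq_sym.
have -> : (cofactor M p j)^`M(v) = 0; last by rewrite mulr0 addr0.
rewrite /cofactor mderivM mderiv_sign mul0r add0r det_kerd ?mulr0 //.
move=> a b; rewrite !mxE; apply: h1.
by rewrite eq_sym neq_lift.
Qed.

Lemma mderivs_det m (M : 'M[P]_m) (pos : 'I_K -> 'I_m) (s : seq 'I_K) :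
  injective pos -> uniq s ->
  (forall i j u, (M i j)^`M(u) = ((i == pos u) && (j == pos u))%:R) ->
  mderivs s (\det M)
    = \det (\matrix_(i, j) if i \in map pos s then (i == j)%:R else M i j).
Proof.
move=> ipos; elim: s => [|u s IH] /= us hM.
  by congr (\det _); apply/matrixP => i j; rewrite mxE.
case/andP: us => us1 us2; rewrite IH //.
rewrite (deriv_det_rr (p := pos u)).
- congr (\det _); apply/matrixP => i j; rewrite !mxE in_cons.
  by case: eqP => [->|].
- move=> i j ni; rewrite mxE; case: ifP => _; first exact: mderiv_nat.
  by rewrite hM (negbTE ni).
- move=> j; rewrite mxE mem_map // (negbTE us1) hM eqxx /=.
  by [].
Qed.

End MP.
Section Spec.
Variable R : realFieldType.
Variables (n d dB nC : nat).
Variables (A : 'M[R]_(n, d)) (B : 'M[R]_(n, dB)) (C : 'M[R]_(nC, d)) (x w : R).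
Local Notation N := (n + (nC + (dB + d)))%N.
Local Notation P := {mpoly R[dB + nC]}.

Definition H0 : 'M[R]_N :=
  col_mx (row_mx w%:M (row_mx 0 (row_mx B A)))
 (col_mx (row_mx 0 (row_mx 0 (row_mx 0 C)))
 (col_mx (row_mx B^T (row_mx 0 (row_mx 0 0)))
         (row_mx A^T (row_mx C^T (row_mx 0 x%:M))))).

Definition vr : 'rV[P]_N :=
  row_mx 0 (row_mx (\row_j zvar R dB j) (row_mx (\row_i yvar R nC i) 0)).

Lemma Hmx_dec : Hmx A B C x w = map_mx (fun a => a%:MP) H0 + diag_mx vr.
Proof.
apply/matrixP => a b; rewrite /Hmx /H0 /vr !mxE.
do ![case: split_ordP => ? -> /=; rewrite ?mxE];
  by rewrite ?eq_shift ?mulr0n ?mul0rn ?mpolyC0 ?addr0 ?add0r ?raddfMn.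
Qed.
End Spec.
Section Sel.
Variable R : realFieldType.

Lemma selT m (S : {set 'I_m}) :
  (colS (1%:M : 'M[R]_m) S)^T *m colS 1%:M S = 1%:M.
Proof.
apply/matrixP => a b; rewrite !mxE (bigD1 (enum_val a)) //= big1.
  by rewrite !mxE eqxx mul1r addr0 (inj_eq enum_val_inj).
by move=> i ne; rewrite !mxE (negbTE ne) mul0r.
Qed.

Lemma selD m (S : {set 'I_m}) :
  colS (1%:M : 'M[R]_m) S *m (colS 1%:M S)^T = diag_mx (\row_i (i \in S)%:R).
Proof.
apply/matrixP => a b; rewrite !mxE.
case: (boolP (a \in S)) => aS.
  rewrite (bigD1 (enum_rank_in aS a)) //= big1.
    by rewrite !mxE enum_rankK_in // eqxx mul1r addr0 eq_sym mulr1n.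
  move=> l ne; rewrite !mxE; case: eqP => [ea|]; last by rewrite mul0r.
  by case/eqP: ne; apply: enum_val_inj; rewrite enum_rankK_in.
rewrite big1 ?mul0rn // => l _; rewrite !mxE.
case: eqP => [ea|]; last by rewrite mul0r.
by move: aS; rewrite ea enum_valP.
Qed.

Lemma colS_mul m k (B : 'M[R]_(k, m)) (S : {set 'I_m}) :
  colS B S = B *m colS 1%:M S.
Proof. by rewrite /colS mulmx_colsub mulmx1. Qed.

Lemma rowS_mul m k (C : 'M[R]_(m, k)) (T : {set 'I_m}) :
  rowS C T = (colS 1%:M T)^T *m C.
Proof.
rewrite /rowS rowsubE; congr (_ *m _); apply/matrixP => i j.
by rewrite !mxE eq_sym.
Qed.

End Sel.
Lemma split_l m n (i : 'I_m) : split (lshift n i) = inl i.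
Proof. exact: (unsplitK (inl i)). Qed.
Lemma split_r m n (i : 'I_n) : split (rshift m i) = inr i.
Proof. exact: (unsplitK (inr i)). Qed.

Section JS.
Variable R : realFieldType.
Variables (n d dB nC : nat).
Variables (A : 'M[R]_(n, d)) (B : 'M[R]_(n, dB)) (C : 'M[R]_(nC, d)) (x w : R).
Variables (S : {set 'I_dB}) (T : {set 'I_nC}).
Local Notation N := (n + (nC + (dB + d)))%N.
Local Notation E := (colS (1%:M : 'M[R]_dB) S).
Local Notation F := (colS (1%:M : 'M[R]_nC) T).

Definition Jm : 'M[R]_(N, (n + d) + (#|S| + #|T|)) :=
  row_mx (row_mx (col_mx 1%:M 0) (col_mx 0 (col_mx 0 (col_mx 0 1%:M))))
         (row_mx (col_mx 0 (col_mx 0 (col_mx E 0))) (col_mx 0 (col_mx F 0))).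

Lemma JtHJ : Jm^T *m H0 A B C x w *m Jm =
  block_mx (block_mx w%:M A A^T x%:M)
    (block_mx (colS B S) 0 0 (rowS C T)^T)
    (block_mx (colS B S) 0 0 (rowS C T)^T)^T 0.
Proof.
rewrite colS_mul rowS_mul /Jm /H0.
rewrite !(tr_row_mx, tr_col_mx, trmx0, trmx1, trmx_mul, trmxK, tr_block_mx).
rewrite !(mul_col_mx, mul_mx_row, mul_row_col, mul0mx, mulmx0, mul1mx, mulmx1, addr0, add0r, add_row_mx, row_mx0).
apply/matrixP => i j; rewrite !mxE.
do ![progress rewrite ?mxE ?split_l ?split_r /= | case: split_ordP => ? e; subst].
all: by [].
Qed.
Lemma JtJ : Jm^T *m Jm = 1%:M.
Proof.
rewrite /Jm.
rewrite !(tr_row_mx, tr_col_mx, trmx0, trmx1, trmx_mul, trmxK, tr_block_mx).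
rewrite !(mul_col_mx, mul_mx_row, mul_row_col, mul0mx, mulmx0, mul1mx, mulmx1, addr0, add0r, add_row_mx, row_mx0, selT).
apply/matrixP => i j; rewrite !mxE.
do ![progress rewrite ?mxE ?split_l ?split_r ?eq_shift /= | case: split_ordP => ? e; subst].
all: by [].
Qed.

Definition keep : 'rV[R]_N :=
  row_mx (const_mx 1) (row_mx (\row_j (j \in T)%:R)
    (row_mx (\row_i (i \in S)%:R) (const_mx 1))).

Lemma JJt : Jm *m Jm^T = diag_mx keep.
Proof.
rewrite /Jm /keep.
rewrite !(tr_row_mx, tr_col_mx, trmx0, trmx1, trmx_mul, trmxK, tr_block_mx).
rewrite !(mul_col_mx, mul_mx_row, mul_row_col, mul0mx, mulmx0, mul1mx, mulmx1, addr0, add0r, add_row_mx, add_col_mx, row_mx0, col_mx0, selD).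
apply/matrixP => i j; rewrite !mxE.
do ![progress rewrite ?mxE ?split_l ?split_r ?eq_shift /= | case: split_ordP => ? e; subst].
all: by [].
Qed.

End JS.
Lemma entry_dec (U V : nzRingType) m (M : 'M[U]_m) (v : 'rV[V]_m) (f : U -> V) a b :
  (map_mx f M + diag_mx v) a b = f (M a b) + v 0 a *+ (a == b).
Proof. by rewrite !mxE. Qed.

Lemma entry2 (U : nzRingType) m (v : 'rV[U]_m) (X : 'M[U]_m) i j :
  (1%:M + diag_mx v *m X) i j = (i == j)%:R + v 0 i * X i j.
Proof. by rewrite mul_diag_mx !mxE. Qed.

Section Fin.
Variable R : realFieldType.
Variables (n d dB nC : nat).
Variables (A : 'M[R]_(n, d)) (B : 'M[R]_(n, dB)) (C : 'M[R]_(nC, d)) (x w : R).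
Variables (S : {set 'I_dB}) (T : {set 'I_nC}).
Local Notation N := (n + (nC + (dB + d)))%N.

Definition pos (u : 'I_(dB + nC)) : 'I_N :=
  match split u with
  | inl i => rshift n (rshift nC (lshift d i))
  | inr j => rshift n (lshift (dB + d) j)
  end.

Lemma posL i : pos (lshift nC i) = rshift n (rshift nC (lshift d i)).
Proof. by rewrite /pos split_l. Qed.
Lemma posR j : pos (rshift dB j) = rshift n (lshift (dB + d) j).
Proof. by rewrite /pos split_r. Qed.

Lemma pos_inj : injective pos.
Proof.
move=> u v; case: (split_ordP u) => i ->; case: (split_ordP v) => j ->;
  rewrite ?posL ?posR => /eqP; rewrite !eq_shift //; by move/eqP->.
Qed.

Lemma vr_der a u : ((vr R n d dB nC) 0 a)^`M(u) = (a == pos u)%:R.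
Proof.
rewrite /vr /pos /yvar /zvar.
do ![progress rewrite ?mxE ?split_l ?split_r ?eq_shift ?mderivXU ?mderiv0 /=
    | case: split_ordP => ? e; subst].
all: by [].
Qed.

Lemma vr_eval a : ((vr R n d dB nC) 0 a).@[fun _ => 0] = 0.
Proof.
rewrite /vr /yvar /zvar.
do ![progress rewrite ?mxE ?split_l ?split_r ?mevalXU ?meval0 /=
    | case: split_ordP => ? e; subst].
all: by [].
Qed.

Lemma Hder a b u :
  ((Hmx A B C x w) a b)^`M(u) = ((a == pos u) && (b == pos u))%:R.
Proof.
rewrite Hmx_dec entry_dec mderivD mderivC mderivMn vr_der add0r.
case: (eqVneq a b) => [<-|ne]; first by rewrite andbb mulr1n.
rewrite mulr0n; case: eqP => // ea; case: eqP => // eb.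
by case/eqP: ne; rewrite ea eb.
Qed.

Lemma Heval a b : ((Hmx A B C x w) a b).@[fun _ => 0] = H0 A B C x w a b.
Proof.
by rewrite Hmx_dec entry_dec mevalD mevalC mevalMn vr_eval mul0rn addr0.
Qed.

Definition ys := [seq lshift nC i | i in ~: S].
Definition zs := [seq rshift dB j | j in ~: T].

Lemma uniq_yz : uniq (ys ++ zs).
Proof.
rewrite cat_uniq (map_inj_uniq (@lshift_inj _ _)) ?enum_uniq //.
rewrite (map_inj_uniq (@rshift_inj _ _)) ?enum_uniq // andbT.
apply/hasPn => u /mapP [j _ ->]; apply/mapP => [[i _ /eqP]].
by rewrite eq_rlshift.
Qed.

Lemma keep_mem a : keep R n d S T 0 a = (a \notin map pos (ys ++ zs))%:R.
Proof.
have notin a' : (forall u, pos u != a') -> a' \notin map pos (ys ++ zs).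
  move=> h; apply/mapP => [[u _ e]]; by move: (h u); rewrite e eqxx.
have memR j : (rshift dB j \in ys ++ zs) = (j \notin T).
  rewrite mem_cat (mem_map (@rshift_inj _ _)) mem_enum in_setC.
  case: (boolP (_ \in ys)) => //; case/mapP => i _ /eqP.
  by rewrite eq_rlshift.
have memL i : (lshift nC i \in ys ++ zs) = (i \notin S).
  rewrite mem_cat (mem_map (@lshift_inj _ _)) mem_enum in_setC.
  case: (boolP (_ \in zs)) => [|_]; last by rewrite orbF.
  by case/mapP => j _ /eqP; rewrite eq_lrshift.
rewrite /keep.
case: (split_ordP a) => a1 ->.
  rewrite mxE split_l mxE notin // => u.
  by case: (split_ordP u) => ? ->; rewrite ?posL ?posR eq_shift.
rewrite mxE split_r; case: (split_ordP a1) => a2 ->.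
  rewrite mxE split_l mxE -posR (mem_map pos_inj) memR negbK.
  by [].
rewrite mxE split_r; case: (split_ordP a2) => a3 ->.
  rewrite mxE split_l mxE -posL (mem_map pos_inj) memL negbK.
  by [].
rewrite mxE split_r mxE notin // => u.
by case: (split_ordP u) => ? ->; rewrite ?posL ?posR !eq_shift.
Qed.

Lemma det_repl :
  \det (\matrix_(i, j) if i \in map pos (ys ++ zs) then (i == j)%:R
                       else H0 A B C x w i j)
  = \det ((Jm R n d S T)^T *m H0 A B C x w *m Jm R n d S T).
Proof.
set J := Jm R n d S T; set H := H0 A B C x w.
have jj : J *m J^T = diag_mx (keep R n d S T) by exact: JJt.
have jtj : J^T *m J = 1%:M by exact: JtJ.
clearbody J H.
have e : \matrix_(i, j) (if i \in map pos (ys ++ zs) then (i == j)%:R else H i j)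
     = 1%:M + J *m (J^T *m (H - 1%:M)).
  rewrite mulmxA jj; apply/matrixP => i j; rewrite entry2 keep_mem !mxE.
  case: (i \in _); first by rewrite mul0r addr0.
  by rewrite mul1r addrCA subrr addr0.
rewrite e sylvester mulmxBr mulmx1 mulmxBl jtj.
by rewrite addrC subrK.
Qed.

End Fin.
Lemma em_lemma (R : realFieldType) (K N : nat) (HM : 'M[{mpoly R[K]}]_N)
  (H : 'M[R]_N) (s : seq 'I_N) :
  (forall i j, (HM i j).@[fun _ => 0] = H i j) ->
  map_mx (meval (fun _ => 0))
     (\matrix_(i, j) if i \in s then (i == j)%:R else HM i j)
  = \matrix_(i, j) if i \in s then (i == j)%:R else H i j.
Proof.
move=> hH; apply/matrixP => i j; rewrite !mxE; case: ifP => _.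
  by rewrite rmorph_nat.
exact: hH.
Qed.

Unset Implicit Arguments.
Theorem proposition3p2 (R : realFieldType) (n d dB nC : nat)
    (A : 'M[R]_(n, d)) (B : 'M[R]_(n, dB)) (C : 'M[R]_(nC, d))
    (k r : nat) (hk : (k <= \rank B)%N) (hr : (r <= \rank C)%N)
    (S : {set 'I_dB}) (T : {set 'I_nC})
    (hS : #|S| = k) (hT : #|T| = r) (x w : R) (hw : w != 0) :
  \det (rowS C T *m (rowS C T)^T) * \det ((colS B S)^T *m colS B S)
    * pSR A B C S T (x * w)
  = (-1) ^+ (k + r) * x ^+ r * w ^ (d%:Z + k%:Z - n%:Z)
    * (mderivs [seq lshift nC i | i in ~: S]
        (mderivs [seq rshift dB j | j in ~: T] (Hpoly A B C x w))).@[fun _ => 0].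
Proof.
subst k r.
have eM : forall p : {mpoly R[dB + nC]}, mderivs [seq lshift nC i | i in ~: S]
    (mderivs [seq rshift dB j | j in ~: T] p) = mderivs (ys nC S ++ zs dB T) p.
  by move=> p; rewrite /mderivs foldr_cat.
rewrite eM /Hpoly (mderivs_det (pos:=@pos n d dB nC) (@pos_inj n d dB nC) (uniq_yz S T) (Hder A B C x w)).
have dm : forall (M : 'M[{mpoly R[dB + nC]}]_(n + (nC + (dB + d)))),
    (\det M).@[fun _ => 0] = \det (map_mx (meval (fun _ => 0)) M).
  by move=> M; rewrite det_map_mx.
rewrite dm (em_lemma _ (Heval A B C x w)) det_repl JtHJ.
set D := \det (block_mx _ _ _ _).
have ss : forall m, (-1) ^+ m * (-1) ^+ m = 1 :> R.
  by move=> m; rewrite -exprMn mulN1r opprK expr1n.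
case: (boolP (((colS B S)^T *m colS B S \in unitmx)
     && (rowS C T *m (rowS C T)^T \in unitmx))) => [/andP [uG uK] | hn].
  have hc := core A x hw uG uK.
  move: hc; rewrite /= -/D; set p := \det ((x * w)%:M - _) => hc.
  have -> : pSR A B C S T (x * w) = p by [].
  have wW : w ^ (d%:Z + #|S|%:Z - n%:Z) * (w ^+ n * w^-1 ^+ #|S| * w^-1 ^+ d) = 1.
    rewrite !expfzDr // -exprnN !exprVn.
    rewrite [w ^ (d%:Z)]/(w ^+ d) [w ^ (#|S|%:Z)]/(w ^+ #|S|).
    have gen : forall a b c : R, a != 0 -> b != 0 -> c != 0 ->
        a * b * c^-1 * (c * b^-1 * a^-1) = 1.
      by move=> a b c a0 b0 c0; rewrite !mulrA mulfVK // mulfK // mulfV.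
    by apply: gen; apply: expf_neq0.
  transitivity ((-1) ^+ (#|S| + #|T|) * w ^ (d%:Z + #|S|%:Z - n%:Z)
      * (x ^+ #|T| * D)); last by ring.
  rewrite hc.
  transitivity (((-1) ^+ (#|S| + #|T|) * (-1) ^+ (#|S| + #|T|))
     * (w ^ (d%:Z + #|S|%:Z - n%:Z) * (w ^+ n * w^-1 ^+ #|S| * w^-1 ^+ d))
     * (\det (rowS C T *m (rowS C T)^T) * \det ((colS B S)^T *m colS B S) * p)).
    by rewrite ss wW !mul1r.
  ring.
have hD : D = 0 by apply: (degen A x w); rewrite -negb_and.
rewrite hD mulr0.
move: hn; rewrite negb_and !unitmxE !unitfE !negbK.
by case/orP => /eqP ->; rewrite ?mulr0 ?mul0r.
Qed.
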